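(* Let $\mathcal{Y}=\{y_1,\dots,y_{n+1}\}\subset\mathbb{R}^n$ be affinely independent and $y_0\in\mathbb{R}^n$, with notation as in the context. Then the $(|\mathcal{I}_-|-1)\times(|\mathcal{I}_-|-1)$ matrix $Y_-P_-$ is invertible (when $|\mathcal{I}_-|=1$ this is the empty matrix, regarded as invertible).
   Context: The barycentric coordinates of $y_0$ w.r.t. $\mathcal{Y}$ are the unique reals $\ell_1,\dots,\ell_{n+1}$ with $\sum_{i=1}^{n+1}\ell_i=1$, $\sum_{i=1}^{n+1}\ell_iy_i=y_0$; set $\ell_0=-1$. The points are ordered so that $\ell_1\ge\ell_2\ge\cdots\ge\ell_{n+1}$. Let $\mathcal{I}_+=\{i\in\{0,\dots,n+1\}:\ell_i>0\}=\{1,\dots,|\mathcal{I}_+|\}$ and $\mathcal{I}_-=\{i\in\{0,\dots,n+1\}:\ell_i<0\}=\{0\}\cup\{n+3-|\mathcal{I}_-|,\dots,n+1\}$. Let $G=\sum_{i=0}^{n+1}\ell_iy_iy_i^T$. Let $Y\in\mathbb{R}^{(n+1)\times n}$ have $i$th row $(y_i-y_0)^T$; then $G=Y^T\operatorname{diag}(\ell_1,\dots,\ell_{n+1})Y$. Let $Y_-$ be the submatrix of $Y$ formed by its last $|\mathcal{I}_-|-1$ rows (those indexed by $\mathcal{I}_-\setminus\{0\}$). Let $P_-\in\mathbb{R}^{n\times(|\mathcal{I}_-|-1)}$ be a matrix whose columns are orthonormal eigenvectors of $G$ for its negative eigenvalues (there are $|\mathcal{I}_-|-1$ of them, counted with multiplicity).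 *)

(* Defs.v *)
From HB Require Import structures.
From mathcomp Require Import all_boot all_order all_algebra.
From mathcomp Require Export reals.
From mathcomp Require Export all_boot all_order all_algebra.
Set Implicit Arguments. Unset Strict Implicit. Unset Printing Implicit Defensive.
Import Order.TTheory GRing.Theory Num.Theory.
Local Open Scope ring_scope.

(* Affine independence of y_0..y_(m-1): the rows (1, y_i) are linearly
   independent, i.e. sum c_i y_i = 0 /\ sum c_i = 0 -> c = 0. *)
Definition affine_independent (R : fieldType) (m n : nat) (y : 'I_m -> 'rV[R]_n) :=
  row_free (\matrix_(i < m) row_mx (1 : 'rV[R]_1) (y i)).

Definition barycentric (R : fieldType) (m n : nat) (y : 'I_m -> 'rV[R]_n)
  (y0 : 'rV[R]_n) (l : 'I_m -> R) :=
  \sum_(i < m) l i = 1 /\ \sum_(i < m) l i *: y i = y0.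

(* G = sum_{i=0}^{n+1} l_i y_i y_i^T with l_0 = -1 (outer products,
   written for row vectors as y^T *m y). *)
Definition Gmat (R : fieldType) (m n : nat) (y : 'I_m -> 'rV[R]_n)
  (y0 : 'rV[R]_n) (l : 'I_m -> R) : 'M[R]_n :=
  \sum_(i < m) l i *: ((y i)^T *m y i) - (y0^T *m y0).

(* Y : rows (y_i - y_0)^T, i = 1..n+1 (here indexed 0..n). *)
Definition Ymat (R : fieldType) (m n : nat) (y : 'I_m -> 'rV[R]_n)
  (y0 : 'rV[R]_n) : 'M[R]_(m, n) :=
  \matrix_(i < m) (y i - y0).

(* Y_- : the last k rows of Y. *)
Definition Yminus (R : fieldType) (m n k : nat) (y : 'I_m.+1 -> 'rV[R]_n)
  (y0 : 'rV[R]_n) : 'M[R]_(k, n) :=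
  rowsub (fun i : 'I_k => (inord (m.+1 - k + i) : 'I_m.+1)) (Ymat y y0).
Arguments Yminus {R m n} k y y0.

(* Main.v *)
Require Import Defs.
From mathcomp Require Import ring lra zify.
Import Order.TTheory GRing.Theory Num.Theory.
Local Open Scope ring_scope.

Section S.
Variable R : realType.

Lemma quad1 (n : nat) (w a : 'rV[R]_n) :
  (w *m (a^T *m a) *m w^T) 0 0 = ((a *m w^T) 0 0) ^+ 2.
Proof.
rewrite !mulmxA -[w *m a^T]trmxK trmx_mul trmxK -mulmxA.
by rewrite [LHS]mxE big_ord1 mxE expr2.
Qed.

Lemma quadG (n : nat) (y : 'I_n.+1 -> 'rV[R]_n) (y0 : 'rV[R]_n) (l : 'I_n.+1 -> R)
  (w : 'rV[R]_n) :
  (w *m Gmat y y0 l *m w^T) 0 0 =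
  \sum_i l i * ((y i *m w^T) 0 0) ^+ 2 - ((y0 *m w^T) 0 0) ^+ 2.
Proof.
rewrite /Gmat mulmxBr mulmxBl mulmx_sumr mulmx_suml mxE summxE [X in _ + X]mxE.
congr (_ - _); first apply eq_bigr => i _.
by rewrite -scalemxAr -scalemxAl [LHS]mxE quad1.
rewrite quad1 //.
Qed.

Lemma quadG2 (n : nat) (y : 'I_n.+1 -> 'rV[R]_n) (y0 : 'rV[R]_n) (l : 'I_n.+1 -> R)
  (w : 'rV[R]_n) : barycentric y y0 l ->
  (w *m Gmat y y0 l *m w^T) 0 0 =
  \sum_i l i * ((y i *m w^T) 0 0 - (y0 *m w^T) 0 0) ^+ 2.
Proof.
move=> [s1 sy]; rewrite quadG.
set b := (y0 *m w^T) 0 0.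
have hb : \sum_i l i * (y i *m w^T) 0 0 = b.
  rewrite /b -sy mulmx_suml summxE; apply: eq_bigr => i _.
  by rewrite -scalemxAl [RHS]mxE.
have e : forall i, l i * ((y i *m w^T) 0 0 - b) ^+ 2 =
   l i * ((y i *m w^T) 0 0) ^+ 2 - (b *+ 2) * (l i * (y i *m w^T) 0 0) + b ^+ 2 * l i.
  by move=> i; ring.
rewrite (eq_bigr _ (fun i _ => e i)) big_split sumrB /= -!mulr_sumr hb s1.
ring.
Qed.

Lemma card_ge (n : nat) (i : 'I_n.+1) : #|[set j : 'I_n.+1 | (i <= j)%N]| = (n.+1 - i)%N.
Proof.
rewrite -sum1_card.
rewrite (eq_bigl (fun j : 'I_n.+1 => true && (i <= j)%N)); last by move=> j; rewrite inE.
by rewrite -(@big_geq_mkord _ _ _ i n.+1 xpredT (fun=> 1%N)) sum_nat_const_nat muln1.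
Qed.

Lemma neg_tail (n k : nat) (l : 'I_n.+1 -> R) :
  (forall i j : 'I_n.+1, (i <= j)%N -> l j <= l i) ->
  k = #|[set i : 'I_n.+1 | l i < 0]| ->
  forall i : 'I_n.+1, l i < 0 -> (n.+1 - k <= i)%N.
Proof.
move=> mono -> i li.
have sub : [set j : 'I_n.+1 | (i <= j)%N] \subset [set i | l i < 0].
  apply/subsetP => j; rewrite !inE => ij; exact: le_lt_trans (mono _ _ ij) li.
have := subset_leq_card sub; rewrite card_ge.
have := ltn_ord i; move: #|_| (nat_of_ord i) => c m; lia.
Qed.
End S.

Theorem lemma4p2 (R : realType) (n : nat) (y : 'I_n.+1 -> 'rV[R]_n)
  (y0 : 'rV[R]_n) (l : 'I_n.+1 -> R) (k : nat) (P : 'M[R]_(n, k)) :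
  affine_independent y ->
  barycentric y y0 l ->
  (forall i j : 'I_n.+1, (i <= j)%N -> l j <= l i) ->
  k = #|[set i : 'I_n.+1 | l i < 0]| ->
  P^T *m P = 1%:M ->
  (forall j : 'I_k, exists2 lam : R, lam < 0 &
      Gmat y y0 l *m col j P = lam *: col j P) ->
  Yminus k y y0 *m P \in unitmx.
Proof.
move=> _ bary mono hk PP eig.
have tail := @neg_tail R n k l mono hk.
have [L HL] : exists L : 'I_k -> R, forall j, L j < 0 /\ Gmat y y0 l *m col j P = L j *: col j P.
  have h : forall j : 'I_k, exists lam : R, lam < 0 /\ Gmat y y0 l *m col j P = lam *: col j P.
    by move=> j; have [lam h1 h2] := eig j; exists lam.
  exact: (fin_all_exists h).
set G := Gmat y y0 l in HL *.
have GP : G *m P = P *m diag_mx (\row_j L j).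
  apply/matrixP => i j; rewrite mul_mx_diag !mxE.
  have := (proj2 (HL j)); move/matrixP/(_ i 0); rewrite !mxE mulrC => <-.
  by apply: eq_bigr => c _; rewrite !mxE.
rewrite -unitmx_tr -row_free_unit -kermx_eq0.
apply/eqP/row_matrixP => r; rewrite row0.
set u := row r _.
have hu : u *m (Yminus k y y0 *m P)^T = 0 by apply/eqP; rewrite -sub_kermx row_sub.
set w := u *m P^T.
have hw : Yminus k y y0 *m w^T = 0.
  by rewrite /w trmx_mul trmxK mulmxA -[LHS]trmxK trmx_mul trmxK hu trmx0.
have q1e : w *m G *m w^T = u *m diag_mx (\row_j L j) *m u^T.
  rewrite /w trmx_mul trmxK -!mulmxA (mulmxA G) GP !mulmxA -(mulmxA u) PP mulmx1.
  by rewrite -!mulmxA.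
have q1 : (w *m G *m w^T) 0 0 = \sum_j - (- (u 0 j ^+ 2 * L j)).
  rewrite q1e mul_mx_diag [LHS]mxE; apply: eq_bigr => j _; rewrite !mxE opprK; ring.
have q2 : 0 <= (w *m G *m w^T) 0 0.
  rewrite quadG2 //; apply: sumr_ge0 => i _.
  case: (ltP (l i) 0) => li; last by apply: mulr_ge0 => //; apply: sqr_ge0.
  have ti := tail i li.
  have jk : (i - (n.+1 - k) < k)%N by have := ltn_ord i; lia.
  pose j : 'I_k := Ordinal jk.
  have e : (y i - y0) *m w^T = row j (Yminus k y y0 *m w^T).
    rewrite row_mul; congr (_ *m _); apply/rowP => c; rewrite !mxE.
    suff -> : (inord (n.+1 - k + j) : 'I_n.+1) = i by [].
    apply: val_inj; rewrite /= inordK; have := ltn_ord i; move: ti; move: (nat_of_ord i) => m; lia.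
  have : ((y i - y0) *m w^T) 0 0 = 0 by rewrite e hw row0 mxE.
  rewrite mulmxBl [X in X = _]mxE [X in _ + X = _]mxE => ->.
  by rewrite expr0n /= mulr0.
apply/rowP => j; rewrite [RHS]mxE.
have z := @psumr_eq0P _ _ xpredT (fun j => - (u 0 j ^+ 2 * L j)).
have hnn : forall j, xpredT j -> 0 <= - (u 0 j ^+ 2 * L j).
  move=> j' _; rewrite oppr_ge0; apply: mulr_ge0_le0; first exact: sqr_ge0.
  exact: ltW (proj1 (HL j')).
have hs : \sum_(j | xpredT j) - (u 0 j ^+ 2 * L j) = 0.
  apply/eqP; rewrite eq_le sumr_ge0 ?andbT; last by move=> j' _; exact: hnn.
  by rewrite -oppr_ge0 -sumrN -q1.
have := z hnn hs j isT; move/eqP; rewrite oppr_eq0 mulf_eq0 (lt_eqF (proj1 (HL j))) orbF.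
by rewrite expf_eq0 /= => /eqP.
Qed.
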